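(* Let $L>0$ and let $\alpha,\beta:\mathbb{R}\to\mathbb{R}^2$ be smooth $L$-periodic maps (initial data) with $\alpha'$ nowhere zero, $\langle\beta,\alpha'\rangle = 0$ and $|\alpha'|^2+|\beta|^2=1$, and such that $\alpha$ has zero rotation index. Let $\gamma(t,s) = \tfrac12(\alpha(s+t)+\alpha(s-t)) + \tfrac12\int_{s-t}^{s+t}\beta(\xi)\,d\xi$. Then there exists a time $T$ such that the unit tangent map $U(T,\cdot)$ of the curve $s\mapsto\gamma(T,s)$ is discontinuous, i.e. $s\mapsto \gamma_{,s}(T,s)/|\gamma_{,s}(T,s)|$ (defined where $\gamma_{,s}(T,s)\neq0$) does not extend to a continuous map on $\mathbb{R}$.
   Context: The rotation index of $\alpha$ is the degree of $\alpha'/|\alpha'|$ as a map from $\mathbb{R}/L\mathbb{Z}$ to the unit circle. *)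

(* Defs.v *)
From Stdlib Require Import Reals.
From Coquelicot Require Import Coquelicot.
Open Scope R_scope.

(* A map R -> R^2 is represented by its two component functions. *)

Definition smooth (f : R -> R) : Prop :=
  forall (n : nat) (x : R), ex_derive_n f n x.

Definition periodic (L : R) (f : R -> R) : Prop :=
  forall s, f (s + L) = f s.

Definition angle_lift (a1 a2 theta : R -> R) : Prop :=
  (forall s, continuous theta s) /\
  forall s,
    Derive a1 s = sqrt (Derive a1 s ^ 2 + Derive a2 s ^ 2) * cos (theta s) /\
    Derive a2 s = sqrt (Derive a1 s ^ 2 + Derive a2 s ^ 2) * sin (theta s).

(* Rotation index of the L-periodic curve alpha = (a1,a2): degree of
   alpha'/|alpha'| as a map R/LZ -> S^1, computed through a continuous lift. *)
Definition has_rotation_index (L : R) (a1 a2 : R -> R) (k : Z) : Prop :=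
  exists theta, angle_lift a1 a2 theta /\ theta L - theta 0 = 2 * PI * IZR k.

Definition gamma_comp (a b : R -> R) (t s : R) : R :=
  / 2 * (a (s + t) + a (s - t)) + / 2 * RInt b (s - t) (s + t).

(* Main.v *)
Require Import Defs.
From Stdlib Require Import Reals Lra Psatz Classical.
From Coquelicot Require Import Coquelicot.
Open Scope R_scope.

Lemma seq_cont (x : nat -> R) (f : R -> R) (s0 : R) :
  continuous f s0 -> is_lim_seq x s0 -> is_lim_seq (fun n => f (x n)) (f s0).
Proof.
  intros Hf Hx. unfold is_lim_seq in *.
  eapply filterlim_comp. exact Hx. exact Hf.
Qed.

Lemma seq_deriv (f : R -> R) (s0 v : R) (h : nat -> R) :
  is_derive f s0 v -> f s0 = 0 -> (forall n, h n <> 0) -> is_lim_seq h 0 ->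
  is_lim_seq (fun n => f (s0 + h n) / h n) v.
Proof.
  intros Hd H0 Hn Hh.
  apply is_derive_Reals in Hd.
  apply is_lim_seq_spec in Hh. apply is_lim_seq_spec.
  intros eps. destruct (Hd eps (cond_pos eps)) as [del Hdel].
  destruct (Hh del) as [N HN]. exists N. intros n Hnn.
  specialize (HN n Hnn). rewrite Rminus_0_r in HN.
  specialize (Hdel (h n) (Hn n) HN). rewrite H0, Rminus_0_r in Hdel. exact Hdel.
Qed.

Definition hs (n : nat) : R := / (INR n + 1).

Lemma hs_pos n : 0 < hs n.
Proof. unfold hs. apply Rinv_0_lt_compat. pose proof (pos_INR n). lra. Qed.

Lemma hs_lim : is_lim_seq hs 0.
Proof.
  apply is_lim_seq_spec. intros eps.
  destruct (INR_archimed eps 1 (cond_pos eps)) as [N HN].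
  exists N. intros n Hn. rewrite Rminus_0_r. pose proof (hs_pos n).
  rewrite Rabs_pos_eq by lra. unfold hs.
  apply le_INR in Hn. pose proof (cond_pos eps).
  apply Rmult_lt_reg_r with (INR n + 1). pose proof (pos_INR n); lra.
  rewrite Rinv_l by (pose proof (pos_INR n); lra). nra.
Qed.

Lemma hs_lim_neg : is_lim_seq (fun n => - hs n) 0.
Proof.
  replace 0 with (-1 * 0) by ring.
  apply is_lim_seq_ext with (fun n => -1 * hs n). intros; ring.
  apply is_lim_seq_mult'. apply is_lim_seq_const. apply hs_lim.
Qed.

Lemma lim_le (u : nat -> R) (l c : R) : is_lim_seq u l -> (forall n, c <= u n) -> c <= l.
Proof.
  intros Hu Hc. pose proof (is_lim_seq_le (fun _ => c) u c l Hc (is_lim_seq_const c) Hu).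
  simpl in H. exact H.
Qed.

Lemma lim_uniq (u : nat -> R) (l1 l2 : R) : is_lim_seq u l1 -> is_lim_seq u l2 -> l1 = l2.
Proof.
  intros H1 H2. apply is_lim_seq_unique in H1. apply is_lim_seq_unique in H2.
  rewrite H1 in H2. injection H2. auto.
Qed.

Lemma alg_key (a b x sg U1 U2 : R) : x <> 0 -> 0 < sg * x ->
  ((a <> 0 \/ b <> 0) -> U1 = a / sqrt (a ^ 2 + b ^ 2) /\ U2 = b / sqrt (a ^ 2 + b ^ 2)) ->
  U1 * (b / x) - U2 * (a / x) = 0 /\ 0 <= sg * (U1 * (a / x) + U2 * (b / x)) /\
  (U1 ^ 2 + U2 ^ 2) * ((a / x) ^ 2 + (b / x) ^ 2) = (a / x) ^ 2 + (b / x) ^ 2.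
Proof.
  intros Hx hsg Hu.
  destruct (Req_dec a 0) as [Ha|Ha]; destruct (Req_dec b 0) as [Hb|Hb].
  - subst. unfold Rdiv. repeat split; ring_simplify; lra.
  - all: assert (Hne : a <> 0 \/ b <> 0) by tauto;
      destruct (Hu Hne) as [E1 E2]; subst U1 U2;
      assert (Hs : 0 < a ^ 2 + b ^ 2) by (destruct Hne; [ pose proof (pow2_gt_0 a) | pose proof (pow2_gt_0 b) ]; nra);
      pose proof (sqrt_lt_R0 _ Hs) as Hq; pose proof (sqrt_sqrt _ (Rlt_le _ _ Hs)) as Hq2;
      set (q := sqrt (a ^ 2 + b ^ 2)) in *;
      repeat split.
  all: try (field; lra).
  all: try (replace (sg * (a / q * (a / x) + b / q * (b / x))) with ((a^2+b^2) / q * (sg * x) / (x * x)) by (field; lra);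
             apply Rmult_le_pos; [apply Rmult_le_pos; [apply Rlt_le, Rdiv_lt_0_compat; lra| lra] | apply Rlt_le, Rinv_0_lt_compat; nra]).
  all: replace ((a / q) ^ 2 + (b / q) ^ 2) with 1; [ring| ].
  all: replace ((a / q) ^ 2 + (b / q) ^ 2) with ((a^2+b^2)/(q*q)) by (field; lra); rewrite Hq2; field; lra.
Qed.

Lemma disc_side (u1 u2 G1 G2 : R -> R) (s0 v1 v2 : R) (h : nat -> R) (sg : R) :
  continuous u1 s0 -> continuous u2 s0 -> is_derive G1 s0 v1 -> is_derive G2 s0 v2 ->
  G1 s0 = 0 -> G2 s0 = 0 -> (forall n, h n <> 0) -> is_lim_seq h 0 ->
  (forall n, 0 < sg * h n) ->
  (forall s, (G1 s <> 0 \/ G2 s <> 0) ->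
     u1 s = G1 s / sqrt (G1 s ^ 2 + G2 s ^ 2) /\
     u2 s = G2 s / sqrt (G1 s ^ 2 + G2 s ^ 2)) ->
  u1 s0 * v2 - u2 s0 * v1 = 0 /\ 0 <= sg * (u1 s0 * v1 + u2 s0 * v2) /\
  (u1 s0 ^ 2 + u2 s0 ^ 2) * (v1 ^ 2 + v2 ^ 2) = v1 ^ 2 + v2 ^ 2.
Proof.
  intros c1 c2 d1 d2 z1 z2 hn hl hsg Hu.
  set (w1 := fun n => G1 (s0 + h n) / h n).
  set (w2 := fun n => G2 (s0 + h n) / h n).
  assert (L1 : is_lim_seq w1 v1) by (apply seq_deriv; auto).
  assert (L2 : is_lim_seq w2 v2) by (apply seq_deriv; auto).
  assert (Lx : is_lim_seq (fun n => s0 + h n) s0).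
  { replace (Finite s0) with (Finite (s0 + 0)) by (f_equal; ring).
    apply is_lim_seq_plus'. apply is_lim_seq_const. exact hl. }
  pose proof (seq_cont _ _ _ c1 Lx) as U1.
  pose proof (seq_cont _ _ _ c2 Lx) as U2.
  assert (key : forall n,
    u1 (s0 + h n) * w2 n - u2 (s0 + h n) * w1 n = 0 /\
    0 <= sg * (u1 (s0 + h n) * w1 n + u2 (s0 + h n) * w2 n) /\
    (u1 (s0 + h n) ^ 2 + u2 (s0 + h n) ^ 2) * (w1 n ^ 2 + w2 n ^ 2) = w1 n ^ 2 + w2 n ^ 2).
  { intro n. unfold w1, w2. apply alg_key; auto. }
  split; [|split].
  - apply lim_uniq with (fun n => u1 (s0 + h n) * w2 n - u2 (s0 + h n) * w1 n).
    + unfold Rminus. apply is_lim_seq_plus'. apply is_lim_seq_mult'; auto.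
      replace (- (u2 s0 * v1)) with (-1 * (u2 s0 * v1)) by ring.
      apply is_lim_seq_ext with (fun n => -1 * (u2 (s0 + h n) * w1 n)). intros; ring.
      apply is_lim_seq_mult'. apply is_lim_seq_const. apply is_lim_seq_mult'; auto.
    + apply is_lim_seq_ext with (fun _ => 0). intro n; symmetry; apply key. apply is_lim_seq_const.
  - apply lim_le with (fun n => sg * (u1 (s0 + h n) * w1 n + u2 (s0 + h n) * w2 n)).
    + apply is_lim_seq_mult'. apply is_lim_seq_const.
      apply is_lim_seq_plus'; apply is_lim_seq_mult'; auto.
    + intro n; apply key.
  - apply lim_uniq with (fun n => (u1 (s0 + h n) ^ 2 + u2 (s0 + h n) ^ 2) * (w1 n ^ 2 + w2 n ^ 2)).
    + apply is_lim_seq_mult'; apply is_lim_seq_plus'; simpl;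
      repeat apply is_lim_seq_mult'; auto; apply is_lim_seq_const.
    + apply is_lim_seq_ext with (fun n => w1 n ^ 2 + w2 n ^ 2). intro n; symmetry; apply key.
      apply is_lim_seq_plus'; simpl; repeat apply is_lim_seq_mult'; auto; apply is_lim_seq_const.
Qed.

Lemma disc (u1 u2 G1 G2 : R -> R) (s0 v1 v2 : R) :
  continuous u1 s0 -> continuous u2 s0 -> is_derive G1 s0 v1 -> is_derive G2 s0 v2 ->
  G1 s0 = 0 -> G2 s0 = 0 -> (v1 <> 0 \/ v2 <> 0) ->
  (forall s, (G1 s <> 0 \/ G2 s <> 0) ->
     u1 s = G1 s / sqrt (G1 s ^ 2 + G2 s ^ 2) /\
     u2 s = G2 s / sqrt (G1 s ^ 2 + G2 s ^ 2)) -> False.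
Proof.
  intros c1 c2 d1 d2 z1 z2 hv Hu.
  destruct (disc_side u1 u2 G1 G2 s0 v1 v2 hs 1 c1 c2 d1 d2 z1 z2) as [A1 [A2 A3]]; auto.
  - intro n; pose proof (hs_pos n); lra.
  - exact hs_lim.
  - intro n; pose proof (hs_pos n); lra.
  - destruct (disc_side u1 u2 G1 G2 s0 v1 v2 (fun n => - hs n) (-1) c1 c2 d1 d2 z1 z2) as [B1 [B2 B3]]; auto.
    + intro n; pose proof (hs_pos n); lra.
    + exact hs_lim_neg.
    + intro n; pose proof (hs_pos n); lra.
    + assert (Hs : 0 < v1 ^ 2 + v2 ^ 2) by (destruct hv; [ pose proof (pow2_gt_0 v1) | pose proof (pow2_gt_0 v2) ]; nra).
      assert (P : u1 s0 * v1 + u2 s0 * v2 = 0) by lra.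
      assert (E : (u1 s0 * v1 + u2 s0 * v2) ^ 2 + (u1 s0 * v2 - u2 s0 * v1) ^ 2 = (u1 s0 ^ 2 + u2 s0 ^ 2) * (v1 ^ 2 + v2 ^ 2)) by ring.
      rewrite P, A1, A3 in E. lra.
Qed.

Lemma cont_eps f x : continuous f x -> forall eps, 0 < eps ->
  exists del, 0 < del /\ forall t, Rabs (t - x) < del -> Rabs (f t - f x) < eps.
Proof.
  intros Hf eps He.
  destruct (Hf _ (locally_ball (f x) (mkposreal eps He))) as [d Hd].
  exists d. split. apply cond_pos. intros t Ht. apply (Hd t). exact Ht.
Qed.

Lemma L_last (f : R -> R) l r v : (forall t, continuous f t) -> l < r -> f l <= v -> v < f r ->
  exists x, l <= x < r /\ f x = v /\ forall t, x < t <= r -> v < f t.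
Proof.
  intros Hc Hlr Hl Hr.
  set (E := fun t => l <= t <= r /\ f t <= v).
  assert (Hb : bound E) by (exists r; intros t [Ht _]; lra).
  assert (He : exists t, E t) by (exists l; split; lra).
  destruct (completeness E Hb He) as [x [Hub Hlub]].
  assert (lx : l <= x) by (apply Hub; split; lra).
  assert (xr : x <= r) by (apply Hlub; intros t [Ht _]; lra).
  assert (Hle : f x <= v).
  { destruct (Rle_or_lt (f x) v) as [H|H]; auto.
    destruct (cont_eps f x (Hc x) (f x - v)) as [d [Hd Hdd]]; try lra.
    assert (Hub2 : is_upper_bound E (x - d / 2)).
    { intros t [Ht Hft]. destruct (Rle_or_lt t (x - d/2)) as [|Hlt]; auto.
      assert (t <= x) by (apply Hub; split; auto).
      specialize (Hdd t). assert (Rabs (t - x) < d) by (rewrite Rabs_left1; lra).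
      specialize (Hdd H1). apply Rabs_def2 in Hdd. lra. }
    specialize (Hlub _ Hub2). lra. }
  assert (xr' : x < r) by (destruct (Req_dec x r); [subst; lra | lra]).
  assert (Hgt : forall t, x < t <= r -> v < f t).
  { intros t Ht. destruct (Rle_or_lt (f t) v) as [H|H]; auto.
    assert (t <= x) by (apply Hub; split; [lra|auto]). lra. }
  exists x. split; [lra|]. split; auto.
  destruct (Rle_or_lt v (f x)) as [H|H]; [lra|].
  destruct (cont_eps f x (Hc x) (v - f x)) as [d [Hd Hdd]]; try lra.
  set (t := Rmin (x + d / 2) r).
  assert (x < t <= r) by (unfold t; apply Rmin_case_strong; intros; lra).
  specialize (Hgt t H0). assert (Rabs (t - x) < d).
  { rewrite Rabs_pos_eq by lra. unfold t. apply Rmin_case_strong; intros; lra. }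
  specialize (Hdd t H1). apply Rabs_def2 in Hdd. lra.
Qed.

Lemma L_first (f : R -> R) l r v : (forall t, continuous f t) -> l < r -> v < f l -> f r <= v ->
  exists x, l < x <= r /\ f x = v /\ forall t, l <= t < x -> v < f t.
Proof.
  intros Hc Hlr Hl Hr.
  destruct (L_last (fun t => f (- t)) (- r) (- l) v) as [x [H1 [H2 H3]]].
  - intro t. apply continuous_comp; [|apply Hc].
    apply (continuous_opp (fun t : R => t) t), continuous_id.
  - lra.
  - rewrite Ropp_involutive. auto.
  - rewrite Ropp_involutive. auto.
  - exists (- x). split; [lra|]. split; auto.
    intros t Ht. specialize (H3 (- t)). rewrite Ropp_involutive in H3. apply H3. lra.
Qed.

Lemma deriv_ge0 f x d r : is_derive f x d -> x < r -> (forall t, x < t <= r -> f x < f t) -> 0 <= d.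
Proof.
  intros Hd Hr Ht. apply is_derive_Reals in Hd.
  destruct (Rle_or_lt 0 d) as [|Hneg]; auto.
  destruct (Hd (- d)) as [del Hdel]; [lra|].
  set (h := Rmin (del / 2) (r - x)).
  assert (0 < h) by (unfold h; apply Rmin_case_strong; intros; pose proof (cond_pos del); lra).
  assert (h <= r - x) by apply Rmin_r.
  assert (h < del) by (unfold h; pose proof (Rmin_l (del/2) (r - x)); pose proof (cond_pos del); lra).
  specialize (Hdel h). assert (h <> 0) by lra. assert (Rabs h < del) by (rewrite Rabs_pos_eq; lra).
  specialize (Hdel H2 H3). specialize (Ht (x + h)). assert (f x < f (x + h)) by (apply Ht; lra).
  apply Rabs_def2 in Hdel. destruct Hdel as [Hq _].
  assert (0 < f (x + h) - f x) by lra. assert (0 < (f (x + h) - f x) / h) by (unfold Rdiv; apply Rmult_lt_0_compat; [lra| apply Rinv_0_lt_compat; lra]). lra.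
Qed.

Lemma deriv_le0 f x d l : is_derive f x d -> l < x -> (forall t, l <= t < x -> f x < f t) -> d <= 0.
Proof.
  intros Hd Hr Ht. apply is_derive_Reals in Hd.
  destruct (Rle_or_lt d 0) as [|Hneg]; auto.
  destruct (Hd d) as [del Hdel]; [lra|].
  set (h := Rmin (del / 2) (x - l)).
  assert (0 < h) by (unfold h; apply Rmin_case_strong; intros; pose proof (cond_pos del); lra).
  assert (h <= x - l) by apply Rmin_r.
  assert (h < del) by (unfold h; pose proof (Rmin_l (del/2) (x - l)); pose proof (cond_pos del); lra).
  specialize (Hdel (- h)). assert (- h <> 0) by lra. assert (Rabs (- h) < del) by (rewrite Rabs_Ropp, Rabs_pos_eq; lra).
  specialize (Hdel H2 H3). specialize (Ht (x + - h)). assert (f x < f (x + - h)) by (apply Ht; lra).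
  apply Rabs_def2 in Hdel. destruct Hdel as [_ Hq].
  assert ((f (x + - h) - f x) / - h < 0).
  { replace ((f (x + - h) - f x) / - h) with (- ((f (x + - h) - f x) / h)) by (field; lra).
    assert (0 < (f (x + - h) - f x) / h) by (unfold Rdiv; apply Rmult_lt_0_compat; [lra| apply Rinv_0_lt_compat; lra]). lra. }
  lra.
Qed.

Lemma clamp_lip a b v1 v2 : v1 <= v2 ->
  Rabs (Rmin (Rmax a v1) v2 - Rmin (Rmax b v1) v2) <= Rabs (a - b).
Proof.
  intro H. unfold Rmin, Rmax.
  repeat (destruct Rle_dec); unfold Rabs; repeat (destruct Rcase_abs); lra.
Qed.

Lemma cont_to_pt f : (forall t, continuous f t) -> continuity f.
Proof. intros H t. apply continuity_pt_filterlim. apply H. Qed.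

Lemma Key (A B dA dB : R -> R) (L x1 y1 : R) :
  0 < L -> (forall t, is_derive A t (dA t)) -> (forall t, is_derive B t (dB t)) ->
  (forall t, A (t + L) = A t) -> (forall t, A t - B t < PI) ->
  y1 < x1 < y1 + L -> PI < A x1 - B y1 ->
  exists x y, A x - B y = PI /\ dA x <> dB y.
Proof.
  intros HL dAh dBh perA ptw Hxy Hgt.
  apply NNPP; intro Hn.
  assert (H : forall x y, A x - B y = PI -> dA x = dB y).
  { intros x y E. destruct (Req_dec (dA x) (dB y)) as [|Hne]; auto.
    exfalso; apply Hn; exists x, y; auto. }
  assert (cA : forall t, continuous A t) by (intro t; apply (ex_derive_continuous (K:=R_AbsRing) (V:=R_NormedModule) A t); exists (dA t); auto).
  assert (cB : forall t, continuous B t) by (intro t; apply (ex_derive_continuous (K:=R_AbsRing) (V:=R_NormedModule) B t); exists (dB t); auto).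
  set (j1 := B y1 + PI). set (j2 := Rmin (A x1) (B x1 + PI)).
  assert (Ay1 : A y1 < j1) by (unfold j1; specialize (ptw y1); lra).
  assert (j2a : j2 <= A x1) by apply Rmin_l.
  assert (j2b : j2 <= B x1 + PI) by apply Rmin_r.
  assert (j12 : j1 < j2) by (unfold j2, j1; apply Rmin_case_strong; intros; specialize (ptw x1); lra).
  assert (S : forall v, j1 < v < j2 -> forall x, A x = v -> dA x = 0).
  { intros v Hv x Ax.
    destruct (IVT_gen B y1 x1 (v - PI) (cont_to_pt B cB)) as [y [_ By]].
    { split; [apply Rle_trans with (B y1); [apply Rmin_l | unfold j1 in Hv; lra]
             | apply Rle_trans with (B x1); [lra | apply Rmax_r]]. }
    assert (HA : forall x', A x' = v -> dA x' = dB y) by (intros x' E; apply H; lra).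
    destruct (L_last A y1 x1 v cA) as [x' [Hx'1 [Hx'2 Hx'3]]]; try lra.
    assert (c1 : 0 <= dA x').
    { apply (deriv_ge0 A x' (dA x') x1); auto; try lra. intros t Ht. rewrite Hx'2. apply Hx'3; auto. }
    destruct (L_first A x1 (y1 + L) v cA) as [x'' [Hx''1 [Hx''2 Hx''3]]]; try lra.
    { rewrite perA. lra. }
    assert (c2 : dA x'' <= 0).
    { apply (deriv_le0 A x'' (dA x'') x1); auto; try lra. intros t Ht. rewrite Hx''2. apply Hx''3; auto. }
    rewrite (HA x) by auto. rewrite (HA x') in c1 by auto. rewrite (HA x'') in c2 by auto. lra. }
  set (v1 := j1 + (j2 - j1) / 3). set (v2 := j1 + 2 * (j2 - j1) / 3).
  assert (v12 : v1 < v2) by (unfold v1, v2; lra).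
  set (h := fun t => Rmin (Rmax (A t) v1) v2).
  assert (Dh : forall t, derivable_pt_lim h t 0).
  { intros t eps Heps.
    destruct (Rlt_or_le (A t) v1) as [C1|C1].
    - destruct (cont_eps A t (cA t) (v1 - A t)) as [d [Hd Hdd]]; try lra.
      exists (mkposreal d Hd). intros k Hk Hkd. simpl in Hkd.
      assert (Rabs (A (t + k) - A t) < v1 - A t) by (apply Hdd; replace (t + k - t) with k by ring; auto).
      apply Rabs_def2 in H0.
      unfold h. rewrite (Rmax_right (A (t + k))), (Rmax_right (A t)) by lra.
      rewrite Rminus_diag, Rdiv_0_l, Rminus_0_r, Rabs_R0. lra.
    - destruct (Rlt_or_le v2 (A t)) as [C2|C2].
      + destruct (cont_eps A t (cA t) (A t - v2)) as [d [Hd Hdd]]; try lra.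
        exists (mkposreal d Hd). intros k Hk Hkd. simpl in Hkd.
        assert (Rabs (A (t + k) - A t) < A t - v2) by (apply Hdd; replace (t + k - t) with k by ring; auto).
        apply Rabs_def2 in H0.
        unfold h. rewrite (Rmax_left (A (t + k))), (Rmax_left (A t)) by lra.
        rewrite (Rmin_right (A (t + k))), (Rmin_right (A t)) by lra.
        rewrite Rminus_diag, Rdiv_0_l, Rminus_0_r, Rabs_R0. lra.
      + assert (Z : dA t = 0) by (apply (S (A t)); auto; unfold v1, v2 in *; lra).
        pose proof (dAh t) as D. apply is_derive_Reals in D. rewrite Z in D.
        destruct (D eps Heps) as [d Hd]. exists d. intros k Hk Hkd.
        specialize (Hd k Hk Hkd). rewrite Rminus_0_r in *.
        unfold Rdiv in *. rewrite Rabs_mult in *.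
        eapply Rle_lt_trans; [|exact Hd].
        apply Rmult_le_compat_r. apply Rabs_pos. apply clamp_lip; lra. }
  destruct (MVT_cor2 h (fun _ => 0) y1 x1) as [c [Hc _]]; try lra.
  { intros; apply Dh. }
  unfold h in Hc. rewrite (Rmax_left (A x1)), (Rmin_right (A x1)) in Hc by (unfold v1, v2 in *; lra).
  rewrite (Rmax_right (A y1)), (Rmin_left v1) in Hc by (unfold v1, v2 in *; lra).
  lra.
Qed.

Lemma Dplus (f g : R -> R) (x a b : R) : is_derive f x a -> is_derive g x b -> is_derive (fun y => f y + g y) x (a + b).
Proof. intros. apply (is_derive_plus f g x a b); auto. Qed.
Lemma Dminus (f g : R -> R) (x a b : R) : is_derive f x a -> is_derive g x b -> is_derive (fun y => f y - g y) x (a - b).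
Proof. intros. apply (is_derive_minus f g x a b); auto. Qed.
Lemma Dmult (f g : R -> R) (x a b : R) : is_derive f x a -> is_derive g x b -> is_derive (fun y => f y * g y) x (a * g x + f x * b).
Proof. intros. apply (is_derive_mult f g x a b); auto. intros; apply Rmult_comm. Qed.
Lemma Dconst (c x : R) : is_derive (fun _ => c) x 0.
Proof. apply (is_derive_const c x). Qed.
Lemma Dval (f : R -> R) (x a b : R) : is_derive f x a -> a = b -> is_derive f x b.
Proof. intros H E; subst; auto. Qed.

Lemma angle_deriv (f cf sf : R -> R) (t dc ds : R) :
  continuous f t -> is_derive cf t dc -> is_derive sf t ds ->
  (forall x, cos (f x) = cf x) -> (forall x, sin (f x) = sf x) ->
  is_derive f t (cf t * ds - sf t * dc).
Proof.
  intros Hc Dc Ds Ec Es.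
  set (N := fun x => cf t * sf x - sf t * cf x).
  set (D := fun x => cf t * cf x + sf t * sf x).
  assert (Dt : D t = 1) by (unfold D; rewrite <- Ec, <- Es; pose proof (sin2_cos2 (f t)); unfold Rsqr in *; lra).
  assert (Nt : N t = 0) by (unfold N; ring).
  assert (DN : is_derive N t (cf t * ds - sf t * dc)).
  { unfold N. apply Dminus; apply is_derive_scal; auto. }
  assert (DD : is_derive D t (cf t * dc + sf t * ds)).
  { unfold D. apply Dplus; apply is_derive_scal; auto. }
  assert (DQ : is_derive (fun x => N x / D x) t (cf t * ds - sf t * dc)).
  { eapply Dval. apply (is_derive_div N D t _ _ DN DD). rewrite Dt; lra. rewrite Dt, Nt. field. }
  assert (DA : is_derive (fun x => f t + atan (N x / D x)) t (cf t * ds - sf t * dc)).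
  { eapply Dval. apply Dplus. apply Dconst.
    apply (is_derive_comp atan (fun x => N x / D x)).
    apply is_derive_Reals. apply derivable_pt_lim_atan. exact DQ.
    rewrite Nt, Dt. simpl. unfold scal; simpl; unfold mult; simpl. field. }
  apply (is_derive_ext_loc (fun x => f t + atan (N x / D x))); auto.
  destruct (cont_eps f t Hc (PI / 2)) as [d [Hd Hdd]]. pose proof PI_RGT_0; lra.
  exists (mkposreal d Hd). intros y Hy. specialize (Hdd y Hy). apply Rabs_def2 in Hdd.
  assert (EN : N y = sin (f y - f t)) by (unfold N; rewrite sin_minus, !Ec, !Es; ring).
  assert (ED : D y = cos (f y - f t)) by (unfold D; rewrite cos_minus, !Ec, !Es; ring).
  rewrite EN, ED. fold (tan (f y - f t)). rewrite atan_tan by lra. simpl. lra.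
Qed.

Lemma closure_W (a1 a2 n th : R -> R) (L : R) : 0 < L ->
  (forall s, is_derive a1 s (n s * cos (th s))) -> (forall s, is_derive a2 s (n s * sin (th s))) ->
  (forall s, 0 < n s) -> (forall s, continuous th s) -> a1 L = a1 0 -> a2 L = a2 0 ->
  exists xM xm, 0 <= xM <= L /\ 0 <= xm <= L /\ PI < th xM - th xm.
Proof.
  intros HL D1 D2 Hn Hth P1 P2.
  assert (Cth : forall c, continuity_pt th c) by (intro c; apply continuity_pt_filterlim, Hth).
  destruct (continuity_ab_maj th 0 L) as [xM [HM1 HM2]]; [lra| intros; apply Cth|].
  destruct (continuity_ab_min th 0 L) as [xm [Hm1 Hm2]]; [lra| intros; apply Cth|].
  exists xM, xm. split; auto. split; auto.
  destruct (Rlt_or_le PI (th xM - th xm)) as [|Hle]; auto. exfalso.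
  set (psi := (th xM + th xm) / 2).
  set (F := fun s => cos psi * a1 s + sin psi * a2 s).
  assert (DF : forall s, is_derive F s (n s * cos (th s - psi))).
  { intro s. eapply Dval. apply Dplus; apply is_derive_scal; auto.
    rewrite cos_minus. ring. }
  assert (Fpos : forall s, 0 <= s <= L -> 0 <= n s * cos (th s - psi)).
  { intros s Hs. apply Rmult_le_pos. apply Rlt_le, Hn.
    specialize (HM1 s Hs). specialize (Hm1 s Hs). apply cos_ge_0; unfold psi; lra. }
  assert (Fc : forall c, 0 < c < L -> F c = F 0).
  { intros c Hc.
    destruct (MVT_cor2 F (fun s => n s * cos (th s - psi)) 0 c) as [x1 [E1 H1]]; [lra| intros; apply is_derive_Reals, DF|].
    destruct (MVT_cor2 F (fun s => n s * cos (th s - psi)) c L) as [x2 [E2 H2]]; [lra| intros; apply is_derive_Reals, DF|].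
    assert (0 <= n x1 * cos (th x1 - psi)) by (apply Fpos; lra).
    assert (0 <= n x2 * cos (th x2 - psi)) by (apply Fpos; lra).
    assert (F L = F 0) by (unfold F; rewrite P1, P2; ring).
    nra. }
  assert (Z : forall c, 0 < c < L -> cos (th c - psi) = 0).
  { intros c Hc.
    assert (Dc : is_derive F c 0).
    { apply (is_derive_ext_loc (fun _ => F 0)); [| apply Dconst].
      assert (Hd : 0 < Rmin c (L - c)) by (apply Rmin_case_strong; intros; lra).
      exists (mkposreal _ Hd). intros y Hy. change (Rabs (y - c) < Rmin c (L - c)) in Hy.
      apply Rabs_def2 in Hy. pose proof (Rmin_l c (L - c)). pose proof (Rmin_r c (L - c)).
      symmetry; apply Fc; lra. }
    pose proof (is_derive_unique _ _ _ Dc). pose proof (is_derive_unique _ _ _ (DF c)).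
    rewrite H in H0. specialize (Hn c).
    destruct (Rmult_integral _ _ (eq_sym H0)); [lra|auto]. }
  set (G := fun s => (- sin psi) * a1 s + cos psi * a2 s).
  assert (DG : forall s, is_derive G s (n s * sin (th s - psi))).
  { intro s. eapply Dval. apply Dplus; apply is_derive_scal; auto.
    rewrite sin_minus. ring. }
  destruct (MVT_cor2 G (fun s => n s * sin (th s - psi)) 0 L) as [x [E H]]; [lra| intros; apply is_derive_Reals, DG|].
  assert (G L = G 0) by (unfold G; rewrite P1, P2; ring).
  assert (n x * sin (th x - psi) = 0) by nra.
  pose proof (Hn x). assert (sin (th x - psi) = 0) by (destruct (Rmult_integral _ _ H1); [lra|auto]).
  pose proof (Z x H). pose proof (sin2_cos2 (th x - psi)). unfold Rsqr in *. rewrite H3, H4 in H5. lra.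
Qed.

Lemma gamma_deriv (a b da : R -> R) (T s : R) :
  (forall x, is_derive a x (da x)) -> (forall x, continuous b x) ->
  is_derive (fun x => gamma_comp a b T x) s
    (/ 2 * (da (s + T) + da (s - T)) + / 2 * (b (s + T) - b (s - T))).
Proof.
  intros Da Cb. unfold gamma_comp.
  apply Dplus; apply is_derive_scal.
  - apply Dplus.
    + eapply Dval. apply (is_derive_comp a (fun x => x + T)). apply Da.
      eapply Dval. apply Dplus. apply is_derive_id. apply Dconst. reflexivity.
      simpl. unfold scal; simpl; unfold mult, one; simpl. ring.
    + eapply Dval. apply (is_derive_comp a (fun x => x - T)). apply Da.
      eapply Dval. apply Dminus. apply is_derive_id. apply Dconst. reflexivity.
      simpl. unfold scal; simpl; unfold mult, one; simpl. ring.
  - eapply Dval.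
    apply (is_derive_RInt_bound_comp b (fun u v => RInt b u v) (fun x => x - T) (fun x => x + T) 1 1 s).
    + apply filter_forall. intros [u v]. simpl. apply (RInt_correct (V:=R_CompleteNormedModule)), (ex_RInt_continuous (V:=R_CompleteNormedModule)). intros; apply Cb.
    + apply Cb.
    + apply Cb.
    + eapply Dval. apply Dminus. apply is_derive_id. apply Dconst. simpl; unfold one; simpl. ring.
    + eapply Dval. apply Dplus. apply is_derive_id. apply Dconst. simpl; unfold one; simpl. ring.
    + unfold minus, scal, plus, opp; simpl. unfold mult; simpl. ring.
Qed.

Lemma sm1 f : smooth f -> forall x, is_derive f x (Derive f x).
Proof. intros H x. apply Derive_correct. exact (H 1%nat x). Qed.
Lemma sm2 f : smooth f -> forall x, is_derive (Derive f) x (Derive (Derive f) x).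
Proof. intros H x. apply Derive_correct. exact (H 2%nat x). Qed.
Lemma dcont (f df : R -> R) : (forall x, is_derive f x (df x)) -> forall x, continuous f x.
Proof. intros H x. apply (ex_derive_continuous (K:=R_AbsRing) (V:=R_NormedModule) f x). exists (df x); auto. Qed.

Lemma deriv_per (f df : R -> R) L : (forall x, is_derive f x (df x)) -> periodic L f -> forall s, df (s + L) = df s.
Proof.
  intros D P s.
  assert (H : is_derive (fun x => f (x + L)) s (df (s + L))).
  { eapply Dval. apply (is_derive_comp f (fun x => x + L)). apply D.
    eapply Dval. apply Dplus. apply is_derive_id. apply Dconst. reflexivity.
    simpl. unfold scal; simpl; unfold mult, one; simpl. ring. }
  assert (H2 : is_derive f s (df (s + L))).
  { eapply is_derive_ext; [|exact H]. intro t; simpl. apply P. }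
  pose proof (is_derive_unique _ _ _ H2). pose proof (is_derive_unique _ _ _ (D s)).
  rewrite H0 in H1. auto.
Qed.

Lemma Key2 (A B dA dB : R -> R) (L x1 y1 : R) :
  0 < L -> (forall t, is_derive A t (dA t)) -> (forall t, is_derive B t (dB t)) ->
  (forall t, A (t + L) = A t) -> (forall t, B (t + L) = B t) -> (forall t, A t - B t < PI) ->
  0 <= x1 <= L -> 0 <= y1 <= L -> PI < A x1 - B y1 ->
  exists x y, A x - B y = PI /\ dA x <> dB y.
Proof.
  intros HL DA DB PA PB ptw Hx Hy Hgt.
  destruct (Rtotal_order y1 x1) as [Hlt|[Heq|Hlt]].
  - apply (Key A B dA dB L x1 y1); auto. split; auto.
    destruct (Req_dec (x1 - y1) L) as [E|E].
    + assert (Ex : x1 = 0 + L) by lra. assert (Ey : y1 = 0) by lra. rewrite Ex, Ey in Hgt.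
      rewrite PA in Hgt. specialize (ptw 0). lra.
    + lra.
  - subst. specialize (ptw x1). lra.
  - apply (Key A B dA dB L x1 (y1 - L)); auto.
    + destruct (Req_dec (y1 - x1) L) as [E|E].
      * assert (Ey : y1 = 0 + L) by lra. assert (Ex : x1 = 0) by lra. rewrite Ex, Ey in Hgt.
        rewrite PB in Hgt. specialize (ptw 0). lra.
      * lra.
    + replace (y1 - L + L) with y1 by ring. replace (B (y1 - L)) with (B y1); auto.
      rewrite <- (PB (y1 - L)). f_equal; ring.
Qed.

Lemma th_per (th c s : R -> R) (L : R) : (forall x, continuous th x) ->
  (forall x, cos (th x) = c x) -> (forall x, sin (th x) = s x) ->
  (forall x, c (x + L) = c x) -> (forall x, s (x + L) = s x) -> th L = th 0 ->
  forall x, th (x + L) = th x.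
Proof.
  intros Ct Hc Hs Pc Ps H0.
  set (d := fun x => th (x + L) - th x).
  assert (Cd : continuity d).
  { intro x. apply continuity_pt_filterlim. unfold d.
    apply (continuous_minus (fun x => th (x + L)) th). apply continuous_comp; [|apply Ct].
    apply (continuous_plus (fun t : R => t) (fun _ => L)). apply continuous_id. apply continuous_const. apply Ct. }
  assert (Cos : forall x, cos (d x) = 1).
  { intro x. unfold d. rewrite cos_minus, !Hc, !Hs, Pc, Ps, <- Hc, <- Hs.
    pose proof (sin2_cos2 (th x)). unfold Rsqr in *. lra. }
  assert (d0 : d 0 = 0) by (unfold d; rewrite Rplus_0_l; lra).
  intro x. destruct (Rtotal_order (d x) 0) as [Hl|[He|Hg]].
  - exfalso. set (v := Rmax (d x) (- PI)).
    destruct (IVT_gen d 0 x v Cd) as [z [_ Hz]].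
    { rewrite d0. unfold v. split.
      - rewrite (Rmin_right 0 (d x)) by lra. apply Rmax_l.
      - rewrite (Rmax_left 0 (d x)) by lra. apply Rmax_case_strong; intros; pose proof PI_RGT_0; lra. }
    specialize (Cos z). rewrite Hz in Cos. rewrite <- cos_neg in Cos.
    assert (0 < - v <= PI) by (unfold v; apply Rmax_case_strong; intros; pose proof PI_RGT_0; lra).
    assert (Hcd : cos (- v) < cos 0) by (apply cos_decreasing_1; pose proof PI_RGT_0; lra). rewrite cos_0 in Hcd. lra.
  - unfold d in He. lra.
  - exfalso. set (v := Rmin (d x) PI).
    destruct (IVT_gen d 0 x v Cd) as [z [_ Hz]].
    { rewrite d0. unfold v. split.
      - rewrite (Rmin_left 0 (d x)) by lra. apply Rmin_case_strong; intros; pose proof PI_RGT_0; lra.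
      - rewrite (Rmax_right 0 (d x)) by lra. apply Rmin_l. }
    specialize (Cos z). rewrite Hz in Cos.
    assert (0 < v <= PI) by (unfold v; apply Rmin_case_strong; intros; pose proof PI_RGT_0; lra).
    assert (Hcd : cos v < cos 0) by (apply cos_decreasing_1; pose proof PI_RGT_0; lra). rewrite cos_0 in Hcd. lra.
Qed.

Lemma dcont_b (f df : R -> R) : (forall x, is_derive f x (df x)) -> forall x, continuous f x.
Proof. intros H x. apply (ex_derive_continuous (K:=R_AbsRing) (V:=R_NormedModule) f x). exists (df x); auto. Qed.

Lemma shift_deriv (f df : R -> R) (c s0 : R) : (forall t, is_derive f t (df t)) ->
  is_derive (fun s => f (s + c)) s0 (df (s0 + c)).
Proof.
  intro D. eapply Dval. apply (is_derive_comp f (fun x => x + c)). apply D.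
  eapply Dval. apply Dplus. apply is_derive_id. apply Dconst. reflexivity.
  simpl. unfold scal; simpl; unfold mult, one; simpl. ring.
Qed.

Lemma G_deriv (d b dd db : R -> R) (T s0 : R) :
  (forall t, is_derive d t (dd t)) -> (forall t, is_derive b t (db t)) ->
  is_derive (fun s => / 2 * (d (s + T) + d (s - T)) + / 2 * (b (s + T) - b (s - T))) s0
    (/ 2 * (dd (s0 + T) + dd (s0 - T)) + / 2 * (db (s0 + T) - db (s0 - T))).
Proof.
  intros Dd Db.
  apply (Dplus (fun s => / 2 * (d (s + T) + d (s - T))) (fun s => / 2 * (b (s + T) - b (s - T)))).
  - apply is_derive_scal.
    apply (Dplus (fun s => d (s + T)) (fun s => d (s - T))).
    + apply shift_deriv; auto.
    + apply (shift_deriv d dd (- T) s0); auto.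
  - apply is_derive_scal.
    apply (Dminus (fun s => b (s + T)) (fun s => b (s - T))).
    + apply shift_deriv; auto.
    + apply (shift_deriv b db (- T) s0); auto.
Qed.

Lemma finish (a1 a2 b1 b2 d1 d2 dd1 dd2 db1 db2 : R -> R) (x y : R) :
  (forall t, is_derive a1 t (d1 t)) -> (forall t, is_derive a2 t (d2 t)) ->
  (forall t, is_derive d1 t (dd1 t)) -> (forall t, is_derive d2 t (dd2 t)) ->
  (forall t, is_derive b1 t (db1 t)) -> (forall t, is_derive b2 t (db2 t)) ->
  d1 x + b1 x = - (d1 y - b1 y) -> d2 x + b2 x = - (d2 y - b2 y) ->
  (d1 x + b1 x) * (dd2 x + db2 x) - (d2 x + b2 x) * (dd1 x + db1 x) <>
  (d1 y - b1 y) * (dd2 y - db2 y) - (d2 y - b2 y) * (dd1 y - db1 y) ->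
  exists T : R,
    ~ (exists u1 u2 : R -> R,
         (forall s, continuous u1 s) /\ (forall s, continuous u2 s) /\
         forall s,
           let g1 := Derive (fun x => gamma_comp a1 b1 T x) s in
           let g2 := Derive (fun x => gamma_comp a2 b2 T x) s in
           (g1 <> 0 \/ g2 <> 0) ->
           u1 s = g1 / sqrt (g1 ^ 2 + g2 ^ 2) /\
           u2 s = g2 / sqrt (g1 ^ 2 + g2 ^ 2)).
Proof.
  intros Da1 Da2 Dd1 Dd2 Db1 Db2 E1 E2 Hne.
  exists ((x - y) / 2). intros [u1 [u2 [c1 [c2 Hu]]]].
  set (T := (x - y) / 2) in *.
  set (s0 := (x + y) / 2).
  assert (Ex : s0 + T = x) by (unfold s0, T; field).
  assert (Ey : s0 - T = y) by (unfold s0, T; field).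
  set (G1 := fun s => / 2 * (d1 (s + T) + d1 (s - T)) + / 2 * (b1 (s + T) - b1 (s - T))).
  set (G2 := fun s => / 2 * (d2 (s + T) + d2 (s - T)) + / 2 * (b2 (s + T) - b2 (s - T))).
  assert (EG1 : forall s, Derive (fun z => gamma_comp a1 b1 T z) s = G1 s).
  { intro s. apply is_derive_unique. apply gamma_deriv; auto. apply (dcont_b b1 db1 Db1). }
  assert (EG2 : forall s, Derive (fun z => gamma_comp a2 b2 T z) s = G2 s).
  { intro s. apply is_derive_unique. apply gamma_deriv; auto. apply (dcont_b b2 db2 Db2). }
  pose proof (G_deriv d1 b1 dd1 db1 T s0 Dd1 Db1) as DG1.
  pose proof (G_deriv d2 b2 dd2 db2 T s0 Dd2 Db2) as DG2.
  rewrite Ex, Ey in DG1, DG2.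
  apply (disc u1 u2 G1 G2 s0 _ _ (c1 s0) (c2 s0) DG1 DG2).
  - unfold G1. rewrite Ex, Ey. lra.
  - unfold G2. rewrite Ex, Ey. lra.
  - destruct (Req_dec (/ 2 * (dd1 x + dd1 y) + / 2 * (db1 x - db1 y)) 0) as [Z1|Z1]; auto.
    destruct (Req_dec (/ 2 * (dd2 x + dd2 y) + / 2 * (db2 x - db2 y)) 0) as [Z2|Z2]; auto.
    exfalso. apply Hne.
    assert (F1 : dd1 y - db1 y = - (dd1 x + db1 x)) by lra.
    assert (F2 : dd2 y - db2 y = - (dd2 x + db2 x)) by lra.
    assert (F3 : d1 y - b1 y = - (d1 x + b1 x)) by lra.
    assert (F4 : d2 y - b2 y = - (d2 x + b2 x)) by lra.
    rewrite F1, F2, F3, F4. ring.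
  - intros s Hs. specialize (Hu s). cbv zeta in Hu. rewrite !EG1, !EG2 in Hu. auto.
Qed.

Lemma pt_alg (D1 D2 b1 b2 c s n : R) : 0 < n -> c ^ 2 + s ^ 2 = 1 -> D1 = n * c -> D2 = n * s ->
  b1 * D1 + b2 * D2 = 0 -> D1 ^ 2 + D2 ^ 2 + b1 ^ 2 + b2 ^ 2 = 1 ->
  cos (atan ((D1 * b2 - D2 * b1) / n / n)) = n /\
  sin (atan ((D1 * b2 - D2 * b1) / n / n)) = (D1 * b2 - D2 * b1) / n /\
  b1 = - s * ((D1 * b2 - D2 * b1) / n) /\ b2 = c * ((D1 * b2 - D2 * b1) / n).
Proof.
  intros Hn Hcs E1 E2 Ho Hnm.
  set (k := (D1 * b2 - D2 * b1) / n).
  assert (Ek : k = c * b2 - s * b1) by (unfold k; rewrite E1, E2; field; lra).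
  assert (O : b1 * c + b2 * s = 0).
  { rewrite E1, E2 in Ho. assert (n * (b1 * c + b2 * s) = 0) by (rewrite <- Ho; ring).
    destruct (Rmult_integral _ _ H); [lra|auto]. }
  assert (B1 : b1 = - s * k).
  { rewrite Ek. replace b1 with (b1 * (c ^ 2 + s ^ 2)) at 1 by (rewrite Hcs; ring).
    replace (b1 * (c ^ 2 + s ^ 2)) with (c * (b1 * c + b2 * s) + (- s * (c * b2 - s * b1))) by ring.
    rewrite O. ring. }
  assert (B2 : b2 = c * k).
  { rewrite Ek. replace b2 with (b2 * (c ^ 2 + s ^ 2)) at 1 by (rewrite Hcs; ring).
    replace (b2 * (c ^ 2 + s ^ 2)) with (s * (b1 * c + b2 * s) + (c * (c * b2 - s * b1))) by ring.
    rewrite O. ring. }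
  assert (Nk : n ^ 2 + k ^ 2 = 1).
  { rewrite E1, E2, B1, B2 in Hnm.
    assert (HH : (n ^ 2 + k ^ 2) * (c ^ 2 + s ^ 2) = 1) by (rewrite <- Hnm; ring).
    rewrite Hcs in HH. lra. }
  assert (Sq : sqrt (1 + (k / n)²) = / n).
  { replace (1 + (k / n)²) with (Rsqr (/ n)).
    apply sqrt_Rsqr. apply Rlt_le, Rinv_0_lt_compat; auto.
    unfold Rsqr. field_simplify; try lra. rewrite <- Nk. field. lra. }
  rewrite cos_atan, sin_atan, Sq. repeat split; auto; field; lra.
Qed.

Theorem proposition2p11 (L : R) (a1 a2 b1 b2 : R -> R) :
  0 < L ->
  smooth a1 -> smooth a2 -> smooth b1 -> smooth b2 ->
  periodic L a1 -> periodic L a2 -> periodic L b1 -> periodic L b2 ->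
  (forall s, Derive a1 s <> 0 \/ Derive a2 s <> 0) ->
  (forall s, b1 s * Derive a1 s + b2 s * Derive a2 s = 0) ->
  (forall s, Derive a1 s ^ 2 + Derive a2 s ^ 2 + b1 s ^ 2 + b2 s ^ 2 = 1) ->
  has_rotation_index L a1 a2 0%Z ->
  exists T : R,
    ~ (exists u1 u2 : R -> R,
         (forall s, continuous u1 s) /\ (forall s, continuous u2 s) /\
         forall s,
           let g1 := Derive (fun x => gamma_comp a1 b1 T x) s in
           let g2 := Derive (fun x => gamma_comp a2 b2 T x) s in
           (g1 <> 0 \/ g2 <> 0) ->
           u1 s = g1 / sqrt (g1 ^ 2 + g2 ^ 2) /\
           u2 s = g2 / sqrt (g1 ^ 2 + g2 ^ 2)).
Proof.
  intros HL S1 S2 S3 S4 P1 P2 P3 P4 Hnz Horth Hnorm Hrot.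
  pose proof (sm1 a1 S1) as Da1. pose proof (sm1 a2 S2) as Da2.
  pose proof (sm2 a1 S1) as Dd1. pose proof (sm2 a2 S2) as Dd2.
  pose proof (sm1 b1 S3) as Db1. pose proof (sm1 b2 S4) as Db2.
  destruct Hrot as [th [[Cth Hth] Hidx]].
  assert (th0 : th L = th 0) by (simpl in Hidx; lra).
  assert (Hq : forall x, 0 < Derive a1 x ^ 2 + Derive a2 x ^ 2).
  { intro x. destruct (Hnz x); [pose proof (pow2_gt_0 _ H) | pose proof (pow2_gt_0 _ H)];
    pose proof (pow2_ge_0 (Derive a1 x)); pose proof (pow2_ge_0 (Derive a2 x)); lra. }
  set (nn := fun x => sqrt (Derive a1 x ^ 2 + Derive a2 x ^ 2)).
  assert (Hnn : forall x, 0 < nn x) by (intro x; apply sqrt_lt_R0, Hq).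
  assert (Hc : forall x, Derive a1 x = nn x * cos (th x)) by (intro x; apply Hth).
  assert (Hs : forall x, Derive a2 x = nn x * sin (th x)) by (intro x; apply Hth).
  clear Hth.
  pose proof (deriv_per a1 (Derive a1) L Da1 P1) as Pd1.
  pose proof (deriv_per a2 (Derive a2) L Da2 P2) as Pd2.
  assert (Pnn : forall x, nn (x + L) = nn x) by (intro x; unfold nn; rewrite Pd1, Pd2; auto).
  assert (Thp : forall x, th (x + L) = th x).
  { apply (th_per th (fun x => Derive a1 x / nn x) (fun x => Derive a2 x / nn x) L Cth); auto.
    - intro x. rewrite Hc. field. apply Rgt_not_eq, Hnn.
    - intro x. rewrite Hs. field. apply Rgt_not_eq, Hnn.
    - intro x. rewrite Pd1, Pnn. auto.
    - intro x. rewrite Pd2, Pnn. auto. }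
  set (K := fun x => (Derive a1 x * b2 x - Derive a2 x * b1 x) / nn x).
  set (ph := fun x => atan ((Derive a1 x * b2 x - Derive a2 x * b1 x) / nn x / nn x)).
  assert (Alg : forall x, cos (ph x) = nn x /\ sin (ph x) = K x /\
                 b1 x = - sin (th x) * K x /\ b2 x = cos (th x) * K x).
  { intro x. unfold ph, K. apply pt_alg; auto.
    all: try (pose proof (sin2_cos2 (th x)) as HH; unfold Rsqr in HH; lra).
    all: try (rewrite Rmult_comm, (Rmult_comm (b2 x)); apply Horth). }
  set (A := fun x => th x + ph x). set (B := fun x => th x - ph x).
  assert (cA : forall x, cos (A x) = Derive a1 x + b1 x).
  { intro x. unfold A. destruct (Alg x) as [X1 [X2 [X3 X4]]]. rewrite cos_plus, X1, X2, X3, Hc. ring. }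
  assert (sA : forall x, sin (A x) = Derive a2 x + b2 x).
  { intro x. unfold A. destruct (Alg x) as [X1 [X2 [X3 X4]]]. rewrite sin_plus, X1, X2, X4, Hs. ring. }
  assert (cB : forall x, cos (B x) = Derive a1 x - b1 x).
  { intro x. unfold B. destruct (Alg x) as [X1 [X2 [X3 X4]]]. rewrite cos_minus, X1, X2, X3, Hc. ring. }
  assert (sB : forall x, sin (B x) = Derive a2 x - b2 x).
  { intro x. unfold B. destruct (Alg x) as [X1 [X2 [X3 X4]]]. rewrite sin_minus, X1, X2, X4, Hs. ring. }
  assert (Cph : forall x, continuous ph x).
  { intro x. apply (ex_derive_continuous (K:=R_AbsRing) (V:=R_NormedModule)).
    unfold ph, nn. auto_derive. pose proof (Hq x).
    assert (E : Derive a1 x * (Derive a1 x * 1) + Derive a2 x * (Derive a2 x * 1) = Derive a1 x ^ 2 + Derive a2 x ^ 2) by ring.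
    rewrite E. pose proof (sqrt_lt_R0 _ (Hq x)).
    assert (ea1 : ex_derive (fun x => Derive a1 x) x) by (exists (Derive (Derive a1) x); apply Dd1).
    assert (ea2 : ex_derive (fun x => Derive a2 x) x) by (exists (Derive (Derive a2) x); apply Dd2).
    assert (eb1 : ex_derive (fun x => b1 x) x) by (exists (Derive b1 x); apply Db1).
    assert (eb2 : ex_derive (fun x => b2 x) x) by (exists (Derive b2 x); apply Db2).
    repeat split; auto; lra. }
  assert (CA : forall x, continuous A x).
  { intro x. apply (continuous_plus th ph); auto. }
  assert (CB : forall x, continuous B x).
  { intro x. apply (continuous_minus th ph); auto. }
  set (dA := fun t => (Derive a1 t + b1 t) * (Derive (Derive a2) t + Derive b2 t) - (Derive a2 t + b2 t) * (Derive (Derive a1) t + Derive b1 t)).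
  set (dB := fun t => (Derive a1 t - b1 t) * (Derive (Derive a2) t - Derive b2 t) - (Derive a2 t - b2 t) * (Derive (Derive a1) t - Derive b1 t)).
  assert (DA : forall t, is_derive A t (dA t)).
  { intro t. apply (angle_deriv A (fun x => Derive a1 x + b1 x) (fun x => Derive a2 x + b2 x)); auto.
    apply Dplus; auto. apply Dplus; auto. }
  assert (DB : forall t, is_derive B t (dB t)).
  { intro t. apply (angle_deriv B (fun x => Derive a1 x - b1 x) (fun x => Derive a2 x - b2 x)); auto.
    apply Dminus; auto. apply Dminus; auto. }
  assert (Pph : forall t, ph (t + L) = ph t).
  { intro t. unfold ph. rewrite Pd1, Pd2, Pnn. unfold periodic in *. rewrite P3, P4. auto. }
  assert (PA : forall t, A (t + L) = A t) by (intro t; unfold A; rewrite Thp, Pph; auto).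
  assert (PB : forall t, B (t + L) = B t) by (intro t; unfold B; rewrite Thp, Pph; auto).
  assert (ptw1 : forall t, A t - B t < PI) by (intro t; unfold A, B; pose proof (atan_bound ((Derive a1 t * b2 t - Derive a2 t * b1 t) / nn t / nn t)); unfold ph; lra).
  assert (ptw2 : forall t, B t - A t < PI) by (intro t; unfold A, B; pose proof (atan_bound ((Derive a1 t * b2 t - Derive a2 t * b1 t) / nn t / nn t)); unfold ph; lra).
  destruct (closure_W a1 a2 nn th L HL) as [xM [xm [HxM [Hxm Hgt]]]]; auto.
  { intro s. rewrite <- Hc. apply Da1. }
  { intro s. rewrite <- Hs. apply Da2. }
  { specialize (P1 0). rewrite Rplus_0_l in P1. auto. }
  { specialize (P2 0). rewrite Rplus_0_l in P2. auto. }
  assert (Sum : (A xM - B xm) + (B xM - A xm) = 2 * (th xM - th xm)) by (unfold A, B; ring).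
  destruct (Rlt_or_le PI (A xM - B xm)) as [C1|C1].
  - destruct (Key2 A B dA dB L xM xm) as [x [y [E N]]]; auto.
    apply (finish a1 a2 b1 b2 (Derive a1) (Derive a2) (Derive (Derive a1)) (Derive (Derive a2)) (Derive b1) (Derive b2) x y); auto.
    + rewrite <- cA, <- cB. replace (A x) with (B y + PI) by lra. rewrite neg_cos. ring.
    + rewrite <- sA, <- sB. replace (A x) with (B y + PI) by lra. rewrite neg_sin. ring.
  - assert (C2 : PI < B xM - A xm) by lra.
    destruct (Key2 B A dB dA L xM xm) as [x [y [E N]]]; auto.
    apply (finish a1 a2 b1 b2 (Derive a1) (Derive a2) (Derive (Derive a1)) (Derive (Derive a2)) (Derive b1) (Derive b2) y x); auto.
    + rewrite <- cA, <- cB. replace (B x) with (A y + PI) by lra. rewrite neg_cos. ring.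
    + rewrite <- sA, <- sB. replace (B x) with (A y + PI) by lra. rewrite neg_sin. ring.
Qed.
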